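(* Let $a,b,c\in\mathbb{R}$ and let $(u(\tau),v(\tau),w(\tau))$ be a solution, with $u,v,w$ pairwise distinct, of $$u'=\frac{c}{u-v}+\frac{b}{u-w},\quad v'=\frac{a}{v-w}+\frac{c}{v-u},\quad w'=\frac{b}{w-u}+\frac{a}{w-v}.$$ Set $\zeta=\frac{1}{\sqrt3}(u+v+w)$, $\eta=\frac{1}{\sqrt2}(u-v)$, $\xi=\frac1{\sqrt6}(u+v-2w)$. Then $\zeta$ is constant along the solution and $$\eta'=\frac{c}{\eta}+\frac{b}{\sqrt3\,\xi+\eta}-\frac{a}{\sqrt3\,\xi-\eta},\qquad \xi'=\sqrt3\Big(\frac{b}{\sqrt3\,\xi+\eta}+\frac{a}{\sqrt3\,\xi-\eta}\Big).$$ Moreover this planar system is a gradient system: $(\eta',\xi')=(\partial_\eta \tilde F,\partial_\xi \tilde F)$ with $\tilde F(\eta,\xi)=c\ln|\eta|+b\ln|\sqrt3\,\xi+\eta|+a\ln|\sqrt3\,\xi-\eta|$.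
   Context: Prime denotes derivative with respect to the (real) time variable $\tau$. *)

(* Defs.v *)
From Stdlib Require Import Reals.
From Coquelicot Require Import Coquelicot.
Open Scope R_scope.

Definition in_interval (lo hi : Rbar) (t : R) : Prop :=
  Rbar_lt lo t /\ Rbar_lt t hi.

Definition rhs_u (a b c u v w : R) : R := c / (u - v) + b / (u - w).
Definition rhs_v (a b c u v w : R) : R := a / (v - w) + c / (v - u).
Definition rhs_w (a b c u v w : R) : R := b / (w - u) + a / (w - v).

Definition zeta_c (u v w : R) : R := / sqrt 3 * (u + v + w).
Definition eta_c (u v w : R) : R := / sqrt 2 * (u - v).
Definition xi_c (u v w : R) : R := / sqrt 6 * (u + v - 2 * w).

Definition rhs_eta (a b c eta xi : R) : R :=
  c / eta + b / (sqrt 3 * xi + eta) - a / (sqrt 3 * xi - eta).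
Definition rhs_xi (a b c eta xi : R) : R :=
  sqrt 3 * (b / (sqrt 3 * xi + eta) + a / (sqrt 3 * xi - eta)).

Definition Ftilde (a b c eta xi : R) : R :=
  c * ln (Rabs eta) + b * ln (Rabs (sqrt 3 * xi + eta))
  + a * ln (Rabs (sqrt 3 * xi - eta)).

(* Main.v *)
Require Import Defs.
From Stdlib Require Import Reals Lra.
From Coquelicot Require Import Coquelicot.
Open Scope R_scope.

Lemma sign_abs_inv y : y <> 0 -> sign y * / Rabs y = / y.
Proof.
intros H. destruct (Rlt_or_le 0 y) as [Hp|Hn].
- rewrite (sign_eq_1 _ Hp), Rabs_pos_eq by lra. ring.
- assert (y < 0) by lra. rewrite (sign_eq_m1 _ H0), Rabs_left by lra.
  field. auto.
Qed.

Lemma dF_eta a b c e x : e <> 0 -> sqrt 3 * x + e <> 0 -> sqrt 3 * x - e <> 0 ->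
 is_derive (fun e => Ftilde a b c e x) e (rhs_eta a b c e x).
Proof.
intros H H0 H1. unfold Ftilde, rhs_eta. auto_derive.
- assert (sqrt 3 * x + - e <> 0) by (intro; apply H1; lra).
  repeat split; auto; apply Rabs_pos_lt; auto.
- replace (sqrt 3 * x + - e) with (sqrt 3 * x - e) by ring.
  rewrite !Rmult_1_l, !Rmult_assoc, !sign_abs_inv by auto.
  unfold Rdiv. ring.
Qed.

Lemma dF_xi a b c e x : e <> 0 -> sqrt 3 * x + e <> 0 -> sqrt 3 * x - e <> 0 ->
 is_derive (fun x => Ftilde a b c e x) x (rhs_xi a b c e x).
Proof.
intros H H0 H1. unfold Ftilde, rhs_xi. auto_derive.
- assert (sqrt 3 * x + - e <> 0) by (intro; apply H1; lra).
  repeat split; auto; apply Rabs_pos_lt; auto.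
- replace (sqrt 3 * x + - e) with (sqrt 3 * x - e) by ring.
  rewrite !Rmult_assoc, !sign_abs_inv by auto.
  unfold Rdiv. ring.
Qed.

Lemma interval_between lo hi t0 t x :
  in_interval lo hi t0 -> in_interval lo hi t ->
  Rmin t0 t <= x <= Rmax t0 t -> in_interval lo hi x.
Proof.
intros [A B] [C D] E. unfold in_interval.
destruct (Rle_dec t0 t).
- rewrite Rmin_left, Rmax_right in E by lra.
  split; [eapply Rbar_lt_le_trans; [exact A| simpl; lra]
         | eapply Rbar_le_lt_trans; [|exact D]; simpl; lra].
- rewrite Rmin_right, Rmax_left in E by lra.
  split; [eapply Rbar_lt_le_trans; [exact C| simpl; lra]
         | eapply Rbar_le_lt_trans; [|exact B]; simpl; lra].
Qed.

Theorem mainTheorem4 (a b c : R) (lo hi : Rbar) (u v w : R -> R) :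
  Rbar_lt lo hi ->
  (forall t, in_interval lo hi t ->
     u t <> v t /\ v t <> w t /\ u t <> w t) ->
  (forall t, in_interval lo hi t ->
     is_derive u t (rhs_u a b c (u t) (v t) (w t)) /\
     is_derive v t (rhs_v a b c (u t) (v t) (w t)) /\
     is_derive w t (rhs_w a b c (u t) (v t) (w t))) ->
  (exists z0 : R, forall t, in_interval lo hi t ->
     zeta_c (u t) (v t) (w t) = z0) /\
  (forall t, in_interval lo hi t ->
     let eta := fun s => eta_c (u s) (v s) (w s) in
     let xi := fun s => xi_c (u s) (v s) (w s) in
     is_derive eta t (rhs_eta a b c (eta t) (xi t)) /\
     is_derive xi t (rhs_xi a b c (eta t) (xi t)) /\
     is_derive (fun e => Ftilde a b c e (xi t)) (eta t)
       (rhs_eta a b c (eta t) (xi t)) /\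
     is_derive (fun x => Ftilde a b c (eta t) x) (xi t)
       (rhs_xi a b c (eta t) (xi t))).
Proof.
intros Hlh Hd Hder.
assert (H2 : sqrt 2 * sqrt 2 = 2) by (apply sqrt_sqrt; lra).
assert (H3 : sqrt 3 * sqrt 3 = 3) by (apply sqrt_sqrt; lra).
assert (H6 : sqrt 6 = sqrt 2 * sqrt 3) by
  (replace 6 with (2*3) by ring; apply sqrt_mult; lra).
assert (P2 : 0 < sqrt 2) by (apply sqrt_lt_R0; lra).
assert (P3 : 0 < sqrt 3) by (apply sqrt_lt_R0; lra).
assert (Dz : forall t, in_interval lo hi t ->
   is_derive (fun s => zeta_c (u s) (v s) (w s)) t 0).
{ intros t Ht. destruct (Hder t Ht) as [Du [Dv Dw]].
  destruct (Hd t Ht) as [n1 [n2 n3]].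
  unfold zeta_c.
  replace 0 with (/ sqrt 3 * (rhs_u a b c (u t) (v t) (w t)
     + rhs_v a b c (u t) (v t) (w t) + rhs_w a b c (u t) (v t) (w t))).
  - apply is_derive_scal. apply (is_derive_plus (fun s => u s + v s) w); [apply (is_derive_plus u v)|]; auto.
  - unfold rhs_u, rhs_v, rhs_w. field.
    repeat split; try lra; intro; first [apply n1; lra | apply n2; lra | apply n3; lra]. }
split.
- assert (exists t0, in_interval lo hi t0) as [t0 Ht0].
  { destruct lo as [l| |], hi as [h| |]; simpl in Hlh; try contradiction.
    + exists ((l+h)/2). split; simpl; lra.
    + exists (l+1). split; simpl; auto; lra.
    + exists (h-1). split; simpl; auto; lra.
    + exists 0. split; simpl; auto. }
  exists (zeta_c (u t0) (v t0) (w t0)). intros t Ht.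
  destruct (MVT_gen (fun s => zeta_c (u s) (v s) (w s)) t0 t (fun _ => 0))
    as [x [_ Hx]].
  + intros x Hx. apply Dz. apply (interval_between lo hi t0 t x); auto. lra.
  + intros x Hx. apply continuity_pt_filterlim.
    apply (ex_derive_continuous (fun s => zeta_c (u s) (v s) (w s))).
    exists 0. apply Dz. apply (interval_between lo hi t0 t x); auto.
  + simpl in Hx. lra.
- intros t Ht eta xi. destruct (Hder t Ht) as [Du [Dv Dw]].
  destruct (Hd t Ht) as [n1 [n2 n3]].
  assert (E1 : eta t <> 0).
  { unfold eta, eta_c. intro E. apply n1.
    apply Rmult_integral in E as [E|E]; [|lra].
    exfalso. apply (Rinv_neq_0_compat (sqrt 2)); lra. }
  assert (E2 : sqrt 3 * xi t + eta t = 2 / sqrt 2 * (u t - w t)).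
  { unfold xi, eta, xi_c, eta_c. rewrite H6. field. lra. }
  assert (E3 : sqrt 3 * xi t - eta t = 2 / sqrt 2 * (v t - w t)).
  { unfold xi, eta, xi_c, eta_c. rewrite H6. field. lra. }
  assert (N2 : sqrt 3 * xi t + eta t <> 0).
  { rewrite E2. apply Rmult_integral_contrapositive; split.
    - apply Rgt_not_eq. apply Rdiv_lt_0_compat; lra.
    - intro; apply n3; lra. }
  assert (N3 : sqrt 3 * xi t - eta t <> 0).
  { rewrite E3. apply Rmult_integral_contrapositive; split.
    - apply Rgt_not_eq. apply Rdiv_lt_0_compat; lra.
    - intro; apply n2; lra. }
  split; [|split; [|split]].
  + replace (rhs_eta a b c (eta t) (xi t)) with
      (/ sqrt 2 * (rhs_u a b c (u t) (v t) (w t) - rhs_v a b c (u t) (v t) (w t))).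
    * unfold eta, eta_c. apply is_derive_scal. apply (is_derive_minus u v); auto.
    * unfold rhs_eta. rewrite E2, E3. unfold eta, eta_c, rhs_u, rhs_v.
      field [H2]. repeat split; try lra; intro; first [apply n1; lra | apply n2; lra | apply n3; lra].
  + replace (rhs_xi a b c (eta t) (xi t)) with
      (/ sqrt 6 * (rhs_u a b c (u t) (v t) (w t) + rhs_v a b c (u t) (v t) (w t)
        - 2 * rhs_w a b c (u t) (v t) (w t))).
    * unfold xi, xi_c. apply is_derive_scal. apply (is_derive_minus (fun s => u s + v s) (fun s => 2 * w s)).
      -- apply (is_derive_plus u v); auto.
      -- apply is_derive_scal; auto.
    * unfold rhs_xi. rewrite E2, E3, H6. unfold rhs_u, rhs_v, rhs_w.
      field [H2 H3]. repeat split; try lra; intro; first [apply n1; lra | apply n2; lra | apply n3; lra].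
  + apply dF_eta; auto.
  + apply dF_xi; auto.
Qed.
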